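(* Let $n\ge1$, let $L_1,L_2,\underline b>0$ and let $y^*\in\mathbb{R}^n$. Let $\mathcal{F}_{L_1,L_2,\underline b,y^*}$ be the set of all $f\in C^1(\mathbb{R}^{3n},\mathbb{R}^n)$, $f=f(x_1,x_2,u)$, such that $f(y^*,0,0)=0$ and for all $x_1,x_2,u\in\mathbb{R}^n$: $\left\|\frac{\partial f}{\partial x_1}\right\|\le L_1$, $\left\|\frac{\partial f}{\partial x_2}\right\|\le L_2$, $\mathrm{Sym}\left[\frac{\partial f}{\partial u}\right]\ge\underline b I_n$. Let $$\Omega_{pd}=\left\{(k_p,k_d)\in(0,\infty)^2\;:\; k_p^2>\bar k,\ \ k_d^2>k_p/\underline b+\bar k\right\},\qquad \bar k=(L_1+L_2)(k_p+k_d)/\underline b.$$ Consider the closed-loop system $\dot x_1=x_2$, $\dot x_2=f(x_1,x_2,u)$ with $u(t)=k_pe(t)+k_d\dot e(t)$, $e(t)=y^*-x_1(t)$. Then for any $(k_p,k_d)\in\Omega_{pd}$ there exist constants $M>0$ and $\lambda>0$, depending only on $(k_p,k_d,L_1,L_2,\underline b)$, such that for all $f\in\mathcal{F}_{L_1,L_2,\underline b,y^*}$ and all initial states $(x_1(0),x_2(0))\in\mathbb{R}^{2n}$, $$\|e(t)\|+\|\dot e(t)\|\le Me^{-\lambda t}\left(\|e(0)\|+\|\dot e(0)\|\right)\quad\text{for all } t\ge0.$$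
   Context: $\|\cdot\|$ denotes the Euclidean norm of vectors and the induced operator norm of matrices. For a square matrix $P$, $\mathrm{Sym}[P]=(P+P^{\mathsf T})/2$. For symmetric matrices, $S_1\ge S_2$ means $S_1-S_2$ is positive semidefinite. $\frac{\partial f}{\partial x_1},\frac{\partial f}{\partial x_2},\frac{\partial f}{\partial u}$ denote the $n\times n$ Jacobian matrices of $f$ with respect to $x_1,x_2,u$; $I_n$ is the identity matrix. *)

(* Defs.v *)
From HB Require Import structures.
From mathcomp Require Import all_boot all_order all_algebra.
From mathcomp Require Import all_classical all_reals all_analysis.
Set Implicit Arguments. Unset Strict Implicit. Unset Printing Implicit Defensive.
Import Order.TTheory GRing.Theory Num.Theory.
Import numFieldNormedType.Exports.
Local Open Scope classical_set_scope.
Local Open Scope ring_scope.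

Definition enorm (R : realType) (n : nat) (v : 'cV[R]_n) : R :=
  Num.sqrt (\sum_(i < n) v i 0 ^+ 2).

Definition opnorm (R : realType) (n : nat) (A : 'M[R]_n) : R :=
  sup [set enorm (A *m v) | v in [set v : 'cV[R]_n | enorm v <= 1]].

Definition symm (R : realType) (n : nat) (P : 'M[R]_n) : 'M[R]_n :=
  2^-1 *: (P + P^T).

Definition psd (R : realType) (n : nat) (S : 'M[R]_n) : Prop :=
  forall v : 'cV[R]_n, 0 <= (v^T *m S *m v) 0 0.
Definition loewner_ge (R : realType) (n : nat) (S1 S2 : 'M[R]_n) : Prop :=
  psd (S1 - S2).

(* f = f(x1,x2,u) viewed as a map on R^{3n} = R^n x R^n x R^n *)
Definition uncurry3 (R : realType) (n : nat)
  (f : 'cV[R]_n -> 'cV[R]_n -> 'cV[R]_n -> 'cV[R]_n)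
  (p : 'cV[R]_n * 'cV[R]_n * 'cV[R]_n) : 'cV[R]_n :=
  f p.1.1 p.1.2 p.2.

Definition evec (R : realType) (n : nat) (j : 'I_n) : 'cV[R]_n := delta_mx j 0.

Definition jac_x1 (R : realType) (n : nat)
  (f : 'cV[R]_n -> 'cV[R]_n -> 'cV[R]_n -> 'cV[R]_n)
  (p : 'cV[R]_n * 'cV[R]_n * 'cV[R]_n) : 'M[R]_n :=
  \matrix_(i < n, j < n) (derive (uncurry3 f) p ((evec R j, 0), 0)) i 0.
Definition jac_x2 (R : realType) (n : nat)
  (f : 'cV[R]_n -> 'cV[R]_n -> 'cV[R]_n -> 'cV[R]_n)
  (p : 'cV[R]_n * 'cV[R]_n * 'cV[R]_n) : 'M[R]_n :=
  \matrix_(i < n, j < n) (derive (uncurry3 f) p ((0, evec R j), 0)) i 0.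
Definition jac_u (R : realType) (n : nat)
  (f : 'cV[R]_n -> 'cV[R]_n -> 'cV[R]_n -> 'cV[R]_n)
  (p : 'cV[R]_n * 'cV[R]_n * 'cV[R]_n) : 'M[R]_n :=
  \matrix_(i < n, j < n) (derive (uncurry3 f) p ((0, 0), evec R j)) i 0.

Definition C1 (R : realType) (n : nat)
  (f : 'cV[R]_n -> 'cV[R]_n -> 'cV[R]_n -> 'cV[R]_n) : Prop :=
  (forall p, differentiable (uncurry3 f) p) /\
  (forall i j : 'I_n,
     continuous (fun p => jac_x1 f p i j) /\
     continuous (fun p => jac_x2 f p i j) /\
     continuous (fun p => jac_u f p i j)).

Definition fclass (R : realType) (n : nat) (L1 L2 b : R) (ystar : 'cV[R]_n)
  (f : 'cV[R]_n -> 'cV[R]_n -> 'cV[R]_n -> 'cV[R]_n) : Prop :=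
  C1 f /\ f ystar 0 0 = 0 /\
  (forall x1 x2 u : 'cV[R]_n,
     opnorm (jac_x1 f (x1, x2, u)) <= L1 /\
     opnorm (jac_x2 f (x1, x2, u)) <= L2 /\
     loewner_ge (symm (jac_u f (x1, x2, u))) (b *: 1%:M)).

Definition kbar (R : realType) (L1 L2 b kp kd : R) : R :=
  (L1 + L2) * (kp + kd) / b.
Definition Omega_pd (R : realType) (L1 L2 b kp kd : R) : Prop :=
  0 < kp /\ 0 < kd /\ kbar L1 L2 b kp kd < kp ^+ 2 /\
  kp / b + kbar L1 L2 b kp kd < kd ^+ 2.

(* (x1, x2) is a solution on [0, +oo) of the PD closed loop
   x1' = x2, x2' = f(x1, x2, u), u = kp e + kd e', e = y* - x1
   (so e' = - x1' = - x2). *)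
Definition pd_solution (R : realType) (n : nat) (kp kd : R) (ystar : 'cV[R]_n)
  (f : 'cV[R]_n -> 'cV[R]_n -> 'cV[R]_n -> 'cV[R]_n)
  (x1 x2 : R -> 'cV[R]_n) : Prop :=
  {within [set t : R | 0 <= t], continuous x1} /\
  {within [set t : R | 0 <= t], continuous x2} /\
  (forall t : R, 0 < t ->
     is_derive t 1 x1 (x2 t) /\
     is_derive t 1 x2
       (f (x1 t) (x2 t) (kp *: (ystar - x1 t) + kd *: (- x2 t)))).

(* Main.v *)
Require Import Defs.
From HB Require Import structures.
From mathcomp Require Import all_boot all_order all_algebra.
From mathcomp Require Import all_classical all_reals all_analysis.
From mathcomp Require Import ring lra.
Set Implicit Arguments. Unset Strict Implicit. Unset Printing Implicit Defensive.
Import Order.TTheory GRing.Theory Num.Theory.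
Import numFieldNormedType.Exports.
Local Open Scope classical_set_scope.
Local Open Scope ring_scope.

Section Alg.
Variables (R : realType) (n : nat).
Implicit Types (u v w : 'cV[R]_n) (A : 'M[R]_n).

Definition dotv u w : R := (u^T *m w) 0 0.

Lemma dotvE u w : dotv u w = \sum_i u i 0 * w i 0.
Proof. by rewrite /dotv mxE; apply: eq_bigr => i _; rewrite mxE. Qed.

Lemma dotvC u w : dotv u w = dotv w u.
Proof. by rewrite !dotvE; apply: eq_bigr => i _; rewrite mulrC. Qed.

Lemma dotvDr u v w : dotv u (v + w) = dotv u v + dotv u w.
Proof. by rewrite /dotv mulmxDr mxE. Qed.
Lemma dotvDl u v w : dotv (v + w) u = dotv v u + dotv w u.
Proof. by rewrite dotvC dotvDr !(dotvC u). Qed.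
Lemma dotvZr (k : R) u w : dotv u (k *: w) = k * dotv u w.
Proof. by rewrite /dotv -scalemxAr mxE. Qed.
Lemma dotvZl (k : R) u w : dotv (k *: u) w = k * dotv u w.
Proof. by rewrite dotvC dotvZr dotvC. Qed.
Lemma dotvNr u w : dotv u (- w) = - dotv u w.
Proof. by rewrite -scaleN1r dotvZr mulN1r. Qed.
Lemma dotvNl u w : dotv (- u) w = - dotv u w.
Proof. by rewrite dotvC dotvNr dotvC. Qed.

Lemma dotv_ge0 u : 0 <= dotv u u.
Proof. by rewrite dotvE; apply: sumr_ge0 => i _; rewrite -expr2 sqr_ge0. Qed.

Lemma enorm_sqr u : enorm u ^+ 2 = dotv u u.
Proof.
rewrite dotvE /enorm sqr_sqrtr; last by apply: sumr_ge0 => i _; rewrite sqr_ge0.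
by apply: eq_bigr => i _; rewrite expr2.
Qed.

Lemma enorm_ge0 u : 0 <= enorm u.
Proof. exact: sqrtr_ge0. Qed.

Lemma enormN u : enorm (- u) = enorm u.
Proof. by rewrite /enorm; congr Num.sqrt; apply: eq_bigr => i _; rewrite mxE sqrrN. Qed.

Lemma enorm0_eq u : enorm u = 0 -> u = 0.
Proof.
move=> h; have : dotv u u = 0 by rewrite -enorm_sqr h expr0n.
rewrite dotvE => /eqP; rewrite psumr_eq0; last by move=> i _; rewrite -expr2 sqr_ge0.
move=> /allP H; apply/matrixP => i j; rewrite ord1 mxE.
have := H i (mem_index_enum _); rewrite /= -expr2 sqrf_eq0 => /eqP //.
Qed.

Lemma CS u w : dotv u w <= enorm u * enorm w.
Proof.
have [u0|] := eqVneq (enorm u) 0.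
  by rewrite u0 (enorm0_eq u0) /dotv trmx0 mul0mx mxE mul0r.
have [w0|] := eqVneq (enorm w) 0.
  by rewrite w0 (enorm0_eq w0) /dotv mulmx0 mxE mulr0.
move=> wn0 un0.
have ua : 0 < enorm u by rewrite lt_def un0 enorm_ge0.
have wa : 0 < enorm w by rewrite lt_def wn0 enorm_ge0.
have := dotv_ge0 (enorm w *: u - enorm u *: w).
rewrite !dotvDl !dotvDr !dotvNl !dotvNr !dotvZl !dotvZr -!enorm_sqr (dotvC w u).
set a := enorm u; set b := enorm w; set d := dotv u w => h.
have hab : 0 < a * b by rewrite mulr_gt0.
nra.
Qed.

Lemma CS' u w : - (enorm u * enorm w) <= dotv u w.
Proof. by rewrite lerNl -dotvNl -(enormN u) CS. Qed.

Lemma entry_le u i : `|u i 0| <= enorm u.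
Proof.
rewrite -(sqrtr_sqr (u i 0)) /enorm ler_sqrt; last by apply: sumr_ge0 => j _; rewrite sqr_ge0.
rewrite (bigD1 i) //= lerDl; apply: sumr_ge0 => j _; rewrite sqr_ge0 //.
Qed.

Lemma enormZ (k : R) u : enorm (k *: u) = `|k| * enorm u.
Proof.
rewrite /enorm -sqrtr_sqr -sqrtrM ?sqr_ge0 // mulr_sumr; congr Num.sqrt.
by apply: eq_bigr => i _; rewrite mxE exprMn.
Qed.

Lemma opnorm_ub A : has_ubound [set enorm (A *m v) | v in [set v : 'cV[R]_n | enorm v <= 1]].
Proof.
exists (Num.sqrt (\sum_i (\sum_j `|A i j|) ^+ 2)) => _ [v /= v1 <-].
rewrite /enorm ler_sqrt; last by apply: sumr_ge0 => i _; rewrite sqr_ge0.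
apply: ler_sum => i _; rewrite -real_normK ?num_real //.
rewrite lerXn2r ?nnegrE ?sumr_ge0 //.
rewrite mxE (le_trans (ler_norm_sum _ _ _)) //; apply: ler_sum => j _.
rewrite normrM ler_piMr //; apply: le_trans (entry_le v j) v1.
Qed.

Lemma opnormP A v : enorm (A *m v) <= opnorm A * enorm v.
Proof.
have [v0|vn0] := eqVneq (enorm v) 0.
  rewrite v0 (enorm0_eq v0) mulmx0 mulr0 /enorm.
  by rewrite (eq_bigr (fun _ => 0)) ?big1 ?sqrtr0 // => i _; rewrite mxE expr0n.
have va : 0 < enorm v by rewrite lt_def vn0 enorm_ge0.
rewrite -ler_pdivrMr // mulrC.
have -> : (enorm v)^-1 * enorm (A *m v) = enorm (A *m ((enorm v)^-1 *: v)).
  by rewrite -scalemxAr enormZ ger0_norm // invr_ge0 enorm_ge0.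
apply: (ub_le_sup (opnorm_ub A)); exists ((enorm v)^-1 *: v) => //=.
by rewrite enormZ ger0_norm ?invr_ge0 ?enorm_ge0 // mulVf.
Qed.

Lemma symm_quad A v : (v^T *m symm A *m v) 0 0 = (v^T *m A *m v) 0 0.
Proof.
rewrite /symm -scalemxAr -scalemxAl mxE mulmxDr mulmxDl mxE.
have -> : (v^T *m A^T *m v) 0 0 = (v^T *m A *m v) 0 0.
  transitivity ((v^T *m A^T *m v)^T 0 0); first by rewrite [RHS]mxE.
  by rewrite !trmx_mul !trmxK mulmxA.
set x := (v^T *m A *m v) 0 0; lra.
Qed.

End Alg.

Section Jac.
Variables (R : realType) (n : nat).
Variable f : 'cV[R]_n -> 'cV[R]_n -> 'cV[R]_n -> 'cV[R]_n.
Local Notation F := (uncurry3 f).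

Lemma cV_decomp (x : 'cV[R]_n) : x = \sum_j x j 0 *: evec R j.
Proof.
rewrite {1}(matrix_sum_delta x); apply: eq_bigr => j _; rewrite big_ord1 //.
Qed.

Lemma lin_decomp (g : 'cV[R]_n -> 'cV[R]_n) :
  (forall y z, g (y + z) = g y + g z) -> (forall (c : R) y, g (c *: y) = c *: g y) ->
  forall x, g x = \sum_j x j 0 *: g (evec R j).
Proof.
move=> gD gZ x.
have g0 : g 0 = 0.
  have h := gD 0 0; rewrite addr0 in h.
  by apply: (addrI (g 0)); rewrite addr0 -h.
rewrite {1}(cV_decomp x) (big_morph g gD g0); apply: eq_bigr => j _; exact: gZ.
Qed.

Lemma entry_sum (c : 'I_n -> R) (M : 'I_n -> 'cV[R]_n) i :
  (\sum_j c j *: M j) i 0 = \sum_j c j * M j i 0.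
Proof. by rewrite summxE; apply: eq_bigr => j _; rewrite mxE. Qed.

Lemma jac_decomp q d : differentiable F q ->
  'D_d F q = jac_x1 f q *m d.1.1 + jac_x2 f q *m d.1.2 + jac_u f q *m d.2.
Proof.
move=> dF; rewrite deriveE //.
set L := 'd F q.
have Hd : d = ((d.1.1, 0), 0) + ((0, d.1.2), 0) + ((0, 0), d.2).
  case: d => [[d1 d2] d3] /=.
  have -> : ((d1, 0), 0) + ((0, d2), 0) + ((0, 0), d3) = ((d1 + 0 + 0, 0 + d2 + 0), 0 + 0 + d3) :> 'cV[R]_n * 'cV[R]_n * 'cV[R]_n by [].
  by rewrite !addr0 !add0r.
rewrite {1}Hd !linearD /=.
congr (_ + _ + _).
- rewrite (@lin_decomp (fun y => L ((y, 0), 0))); first last.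
  + move=> c y; rewrite -linearZ; congr (L _).
    apply/esym; rewrite -[LHS]/(((c *: y, c *: 0), c *: 0) : 'cV[R]_n * 'cV[R]_n * 'cV[R]_n) ?scaler0 ?addr0 //.
  + move=> y z; rewrite -linearD; congr (L _).
    apply/esym; rewrite -[LHS]/(((y + z, 0 + 0), 0 + 0) : 'cV[R]_n * 'cV[R]_n * 'cV[R]_n) ?scaler0 ?addr0 //.
  apply/matrixP => i k; rewrite ord1 entry_sum [RHS]mxE.
  apply: eq_bigr => j _; rewrite mxE mulrC deriveE //.
- rewrite (@lin_decomp (fun y => L ((0, y), 0))); first last.
  + move=> c y; rewrite -linearZ; congr (L _).
    apply/esym; rewrite -[LHS]/(((c *: 0, c *: y), c *: 0) : 'cV[R]_n * 'cV[R]_n * 'cV[R]_n) ?scaler0 ?addr0 //.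
  + move=> y z; rewrite -linearD; congr (L _).
    apply/esym; rewrite -[LHS]/(((0 + 0, y + z), 0 + 0) : 'cV[R]_n * 'cV[R]_n * 'cV[R]_n) ?scaler0 ?addr0 //.
  apply/matrixP => i k; rewrite ord1 entry_sum [RHS]mxE.
  apply: eq_bigr => j _; rewrite mxE mulrC deriveE //.
- rewrite (@lin_decomp (fun y => L ((0, 0), y))); first last.
  + move=> c y; rewrite -linearZ; congr (L _).
    apply/esym; rewrite -[LHS]/(((c *: 0, c *: 0), c *: y) : 'cV[R]_n * 'cV[R]_n * 'cV[R]_n) ?scaler0 ?addr0 //.
  + move=> y z; rewrite -linearD; congr (L _).
    apply/esym; rewrite -[LHS]/(((0 + 0, 0 + 0), y + z) : 'cV[R]_n * 'cV[R]_n * 'cV[R]_n) ?scaler0 ?addr0 //.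
  apply/matrixP => i k; rewrite ord1 entry_sum [RHS]mxE.
  apply: eq_bigr => j _; rewrite mxE mulrC deriveE //.
Qed.
End Jac.

Section Vec.
Variables (R : realType) (n : nat).

Lemma entry_derive (X : R -> 'cV[R]_n) (t : R) (dX : 'cV[R]_n) (i : 'I_n) :
  is_derive t 1 X dX -> is_derive t 1 (fun s => X s i 0) (dX i 0).
Proof.
case=> dx <-; have := dx; rewrite derivable_mxP => h.
by apply: DeriveDef; [exact: h | rewrite derive_mx // mxE].
Qed.

Lemma dot_derive (X Y : R -> 'cV[R]_n) (t : R) (dX dY : 'cV[R]_n) :
  is_derive t 1 X dX -> is_derive t 1 Y dY ->
  is_derive t 1 (fun s => dotv (X s) (Y s)) (dotv dX (Y t) + dotv (X t) dY).
Proof.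
move=> hX hY.
have -> : (fun s => dotv (X s) (Y s)) = \sum_(i < n) (fun s => X s i 0 * Y s i 0).
  by rewrite fct_sumE; apply/funext => s; rewrite dotvE.
apply: is_derive_eq.
  apply: is_derive_sum => i.
  exact: (is_deriveM (entry_derive i hX) (entry_derive i hY)).
rewrite !dotvE -big_split /=; apply: eq_bigr => i _.
change (X t i 0 * dY i 0 + Y t i 0 * dX i 0 = dX i 0 * Y t i 0 + X t i 0 * dY i 0).
by rewrite addrC mulrC.
Qed.

Lemma within_comp_cont {T1 T2 : topologicalType} (A : set R) (g : T1 -> T2) (X : R -> T1) :
  continuous g -> {within A, continuous X} -> {within A, continuous (g \o X)}.
Proof. by move=> cg cX; apply: within_continuous_comp => // y _; exact: cg. Qed.

Lemma dot_cont (A : set R) (X Y : R -> 'cV[R]_n) :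
  {within A, continuous X} -> {within A, continuous Y} ->
  {within A, continuous (fun s => dotv (X s) (Y s))}.
Proof.
move=> hX hY.
have -> : (fun s => dotv (X s) (Y s)) = \sum_(i < n) (fun s => X s i 0 * Y s i 0).
  by rewrite fct_sumE; apply/funext => s; rewrite dotvE.
move=> x; elim/big_ind: _ => [|f g cf cg|i _].
- exact: cst_continuous.
- exact: continuousD.
- apply: continuousM.
    have H := (within_comp_cont (@coord_continuous R n 1 i 0) hX). exact: (H x).
  + have H := (within_comp_cont (@coord_continuous R n 1 i 0) hY). exact: (H x).
Qed.

End Vec.

Section MVTF.
Variables (R : realType) (n : nat).
Variable f : 'cV[R]_n -> 'cV[R]_n -> 'cV[R]_n -> 'cV[R]_n.
Local Notation F := (uncurry3 f).

Lemma mvt_F (v : 'cV[R]_n) (p0 d : 'cV[R]_n * 'cV[R]_n * 'cV[R]_n) :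
  (forall q, differentiable F q) ->
  exists q, dotv v (F (d + p0) - F p0) =
    dotv v (jac_x1 f q *m d.1.1 + jac_x2 f q *m d.1.2 + jac_u f q *m d.2).
Proof.
move=> dF.
pose G := fun s : R => F (s *: d + p0).
have eqf : forall s : R, (fun h : R => h^-1 *: ((G \o shift s) (h *: 1) - G s)) =
   (fun h : R => h^-1 *: ((F \o shift (s *: d + p0)) (h *: d) - F (s *: d + p0))).
  move=> s; apply/funext => h /=; rewrite /G /=.
  by rewrite [h *: 1]mulr1 scalerDl addrA.
have dG : forall s : R, is_derive s 1 G ('D_d F (s *: d + p0)).
  move=> s; apply: DeriveDef; rewrite /derivable /derive eqf //.
  exact: diff_derivable.
pose g := fun s : R => dotv v (G s).
have dg : forall s : R, is_derive s 1 g (dotv v ('D_d F (s *: d + p0))).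
  move=> s; apply: is_derive_eq.
    exact: (dot_derive (is_derive_cst v s 1) (dG s)).
  by rewrite /dotv trmx0 mul0mx mxE add0r.
have cg : {within `[0, 1], continuous g}.
  apply: derivable_within_continuous => x _; exact: (@ex_derive _ _ _ _ _ _ _ (dg x)).
have [c _ hc] := MVT ltr01 (fun x _ => dg x) cg.
exists (c *: d + p0).
rewrite -jac_decomp // -[in RHS](mulr1 (dotv _ _)) -[1 in RHS](subr0 1) -hc.
by rewrite /g /G scale1r scale0r add0r dotvDr dotvNr.
Qed.

End MVTF.



Section Key.
Variables (R : realType) (n : nat).

Lemma quad_lb (J : 'M[R]_n) (b : R) (v : 'cV[R]_n) :
  loewner_ge (symm J) (b *: 1%:M) -> b * dotv v v <= dotv v (J *m v).
Proof.
rewrite /loewner_ge /psd => /(_ v); rewrite mulmxBr mulmxBl mxE symm_quad scalemx1 mul_mx_scalar.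
rewrite [X in _ + X]mxE -scalemxAl [X in _ - X]mxE /dotv mulmxA subr_ge0 //.
Qed.

Lemma combine (J1 J2 J3 : 'M[R]_n) (v z w : 'cV[R]_n) (L1 L2 b kd : R) :
  opnorm J1 <= L1 -> opnorm J2 <= L2 -> loewner_ge (symm J3) (b *: 1%:M) -> 0 < kd ->
  kd * b * dotv v v - enorm v * (L1 * enorm z + L2 * enorm w)
  <= dotv v (J1 *m - z + J2 *m - w + J3 *m (kd *: v)).
Proof.
move=> H1 H2 H3 kd0.
rewrite !dotvDr !mulmxN !dotvNr -scalemxAr dotvZr.
have h1 : dotv v (J1 *m z) <= enorm v * (L1 * enorm z).
  apply: (le_trans (CS _ _)); apply: ler_wpM2l; first exact: enorm_ge0.
  apply: (le_trans (opnormP _ _)); apply: ler_wpM2r; first exact: enorm_ge0.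
  exact: H1.
have h2 : dotv v (J2 *m w) <= enorm v * (L2 * enorm w).
  apply: (le_trans (CS _ _)); apply: ler_wpM2l; first exact: enorm_ge0.
  apply: (le_trans (opnormP _ _)); apply: ler_wpM2r; first exact: enorm_ge0.
  exact: H2.
have h3 := quad_lb v H3.
have h3' : kd * (b * dotv v v) <= kd * dotv v (J3 *m v) by rewrite ler_pM2l.
rewrite mulrDr; lra.
Qed.

Lemma key_bound (f : 'cV[R]_n -> 'cV[R]_n -> 'cV[R]_n -> 'cV[R]_n)
  (L1 L2 b kp kd : R) (ystar z w : 'cV[R]_n) :
  fclass L1 L2 b ystar f -> 0 < kd ->
  kd * b * dotv ((kp / kd) *: z + w) ((kp / kd) *: z + w)
   - enorm ((kp / kd) *: z + w) * (L1 * enorm z + L2 * enorm w)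
  <= dotv ((kp / kd) *: z + w) (f (ystar - z) (- w) (kp *: z + kd *: w)).
Proof.
move=> [[dF _] [f0 Hb]] kd0.
set v := (kp / kd) *: z + w.
have [[[q1 q2] q3] hq] := mvt_F v ((ystar, 0), 0) ((- z, - w), kd *: v) dF.
have e1 : uncurry3 f (((- z, - w), kd *: v) + ((ystar, 0), 0)) = f (ystar - z) (- w) (kp *: z + kd *: w).
  rewrite /uncurry3 /= !addr0 [- z + _]addrC; congr (f _ _ _).
  by rewrite /v scalerDr scalerA mulrC divfK // gt_eqF.
have e2 : uncurry3 f ((ystar, 0), 0) = 0 by exact: f0.
rewrite e1 e2 subr0 in hq.
have hq' : dotv v (f (ystar - z) (- w) (kp *: z + kd *: w)) = dotv v (jac_x1 f (q1, q2, q3) *m (- z) + jac_x2 f (q1, q2, q3) *m (- w) + jac_u f (q1, q2, q3) *m (kd *: v)) := hq.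
rewrite hq'.
have [H1 [H2 H3]] := Hb q1 q2 q3.
exact: combine.
Qed.

End Key.

Section Scalar.
Variable R : realType.

Lemma quad_form_lb (p q r x y : R) : 0 < p -> 0 < r -> q ^+ 2 < 4 * p * r ->
  (4 * p * r - q ^+ 2) / (4 * (p + r)) * (x ^+ 2 + y ^+ 2) <= p * x ^+ 2 - q * x * y + r * y ^+ 2.
Proof.
move=> p0 r0 hq.
set d := (4 * p * r - q ^+ 2) / (4 * (p + r)).
have s0 : 0 < p + r by lra.
have hd : 4 * d * (p + r) = 4 * p * r - q ^+ 2.
  rewrite /d; field; lra.
have d0 : 0 < d by rewrite /d divr_gt0 //; lra.
have hp' : 0 < p - d.
  have : d * (p + r) < p * (p + r) by nra.
  by rewrite ltr_pM2r //; lra.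
have E : 4 * (p - d) * (p * x ^+ 2 - q * x * y + r * y ^+ 2 - d * (x ^+ 2 + y ^+ 2))
   = (2 * (p - d) * x - q * y) ^+ 2 + 4 * d ^+ 2 * y ^+ 2.
  have : 4 * (p - d) * (r - d) - q ^+ 2 = 4 * d ^+ 2 by nra.
  move=> h; nra.
have : 0 <= 4 * (p - d) * (p * x ^+ 2 - q * x * y + r * y ^+ 2 - d * (x ^+ 2 + y ^+ 2)).
  by rewrite E addr_ge0 // ?sqr_ge0 // mulr_ge0 // ?sqr_ge0 // mulr_ge0 // ?sqr_ge0.
rewrite pmulr_rge0; [lra | lra].
Qed.

End Scalar.


Lemma consts (R : realType) (L1 L2 b kp kd : R) :
  0 < L1 -> 0 < L2 -> 0 < b -> Omega_pd L1 L2 b kp kd ->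
  let c := kp / kd in
  let p := c * (b * kp - L1) in
  let q := c * L2 + L1 in
  let r := kd * b - c - L2 in
  [/\ 0 < c, c * kd = kp, 0 < p, 0 < r & q ^+ 2 < 4 * p * r] /\
  (2 * c) ^+ 2 < 4 * (2 * b * kp) * 1.
Proof.
move=> L10 L20 b0 [kp0 [kd0 [Hk1 Hk2]]] c p q r.
rewrite /kbar ltr_pdivrMr // in Hk1.
rewrite /kbar -mulrDl ltr_pdivrMr // in Hk2.
have c0 : 0 < c by rewrite /c divr_gt0.
have hc : c * kd = kp by rewrite /c divfK // gt_eqF.
set A := kp * (b * kp - L1).
set B := b * kd ^+ 2 - kp - L2 * kd.
set X := kp * L2 + kd * L1.
have pA : p * kd = A by rewrite /p /A mulrAC hc.
have rB : r * kd = B by rewrite /r /B !mulrBl hc; ring.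
have qX : q * kd = X by rewrite /q /X mulrDl mulrAC hc; ring.
have hA : X + L2 * kd < A.
  rewrite /A /X -subr_gt0.
  have -> : kp * (b * kp - L1) - (kp * L2 + kd * L1 + L2 * kd) = kp ^+ 2 * b - (L1 + L2) * (kp + kd) by ring.
  by rewrite subr_gt0.
have hB : X + L1 * kp < B.
  rewrite /B /X -subr_gt0.
  have -> : b * kd ^+ 2 - kp - L2 * kd - (kp * L2 + kd * L1 + L1 * kp) = kd ^+ 2 * b - (kp + (L1 + L2) * (kp + kd)) by ring.
  by rewrite subr_gt0.
have X0 : 0 < X by rewrite /X addr_gt0 // mulr_gt0.
clearbody c p q r A B X.
have m1 := mulr_gt0 L20 kd0; have m2 := mulr_gt0 L10 kp0.
have hAB : X ^+ 2 < 4 * A * B.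
  have h1 : X * X < A * B by apply: ltr_pM; lra.
  have : 0 < A * B by apply: mulr_gt0; lra.
  rewrite expr2; lra.
have p0 : 0 < p.
  by rewrite -(pmulr_lgt0 _ kd0) pA; lra.
have r0 : 0 < r.
  by rewrite -(pmulr_lgt0 _ kd0) rB; lra.
split; first split => //.
  have e : (4 * p * r - q ^+ 2) * kd ^+ 2 = 4 * A * B - X ^+ 2.
    by rewrite -pA -rB -qX; ring.
  rewrite -subr_gt0 -(pmulr_lgt0 _ (exprn_gt0 2 kd0)) e; lra.
have h1 : 0 < (L1 + L2) * (kp + kd) by apply: mulr_gt0; lra.
have h2 : kp * kp < kp * (kd ^+ 2 * b) by rewrite ltr_pM2l //; lra.
rewrite -(ltr_pM2r (exprn_gt0 2 kd0)).
have -> : (2 * c) ^+ 2 * kd ^+ 2 = 4 * (kp * kp) by rewrite -hc; ring.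
have -> : 4 * (2 * b * kp) * 1 * kd ^+ 2 = 8 * (kp * (kd ^+ 2 * b)) by ring.
have : 0 < kp * kp by apply: mulr_gt0.
lra.
Qed.

Lemma final_ineq (R : realType) (b kp kd L1 L2 c Z W N zw : R) :
  0 <= L1 -> 0 <= L2 -> c * kd = kp -> 0 < c -> 0 <= Z -> 0 <= W -> 0 <= N -> zw <= Z * W ->
  N ^+ 2 = c ^+ 2 * Z ^+ 2 + 2 * c * zw + W ^+ 2 ->
  2 * (2 * b * kp) * zw + 2 * c * W ^+ 2 - 2 * (kd * b * N ^+ 2 - N * (L1 * Z + L2 * W))
  <= - 2 * (c * (b * kp - L1) * Z ^+ 2 - (c * L2 + L1) * Z * W + (kd * b - c - L2) * W ^+ 2).
Proof.
move=> L10 L20 hc c0 Z0 W0 N0 hzw hN.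
have hN' : N <= c * Z + W.
  have key : N ^+ 2 <= (c * Z + W) ^+ 2.
    rewrite hN; have : c * zw <= c * (Z * W) by rewrite ler_pM2l.
    move=> h.
    have -> : (c * Z + W) ^+ 2 = c ^+ 2 * Z ^+ 2 + 2 * (c * (Z * W)) + W ^+ 2 by ring.
    lra.
  have cZW : 0 <= c * Z + W by rewrite addr_ge0 // mulr_ge0 // ltW.
  by move: key; rewrite ler_pXn2r // nnegrE.
have hP : N * (L1 * Z + L2 * W) <= (c * Z + W) * (L1 * Z + L2 * W).
  apply: ler_wpM2r => //.
  by rewrite addr_ge0 // mulr_ge0.
rewrite hN -hc.
have E : 2 * (2 * b * (c * kd)) * zw + 2 * c * W ^+ 2 -
  2 * (kd * b * (c ^+ 2 * Z ^+ 2 + 2 * c * zw + W ^+ 2) - N * (L1 * Z + L2 * W)) =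
  - 2 * (c * (b * (c * kd) - L1) * Z ^+ 2 - (c * L2 + L1) * Z * W + (kd * b - c - L2) * W ^+ 2)
  + 2 * (N * (L1 * Z + L2 * W) - (c * Z + W) * (L1 * Z + L2 * W)) by ring.
rewrite E; lra.
Qed.

Section Decay.
Variables (R : realType) (n : nat).

Lemma is_derive_ext {W : normedModType R} {f g : R -> W} {t : R} {df : W} :
  (forall s, f s = g s) -> is_derive t 1 f df -> is_derive t 1 g df.
Proof. by move=> /funext ->. Qed.

Lemma decay (kp kd a c mu : R) (ystar : 'cV[R]_n)
  (f : 'cV[R]_n -> 'cV[R]_n -> 'cV[R]_n -> 'cV[R]_n) (x1 x2 : R -> 'cV[R]_n) :
  pd_solution kp kd ystar f x1 x2 ->
  let z := fun s => ystar - x1 s in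
  let w := fun s => - x2 s in
  let F := fun s => f (x1 s) (x2 s) (kp *: (ystar - x1 s) + kd *: (- x2 s)) in
  let V := fun s => a * dotv (z s) (z s) + 2 * c * dotv (z s) (w s) + dotv (w s) (w s) in
  (forall t : R, 0 < t ->
     2 * a * dotv (z t) (w t) + 2 * c * dotv (w t) (w t) - 2 * dotv (c *: z t + w t) (F t)
     <= - mu * V t) ->
  forall t : R, 0 <= t -> V t <= V 0 * expR (- mu * t).
Proof.
move=> [cx1 [cx2 dx]] z w F V hV.
have dz : forall t : R, 0 < t -> is_derive t 1 z (w t).
  move=> t /dx [d1 _].
  have h := is_deriveB (is_derive_cst ystar t 1) d1.
  rewrite sub0r in h.
  by apply: (is_derive_ext _ h) => s.
have dw : forall t : R, 0 < t -> is_derive t 1 w (- F t).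
  move=> t /dx [_ d2].
  by apply: (is_derive_ext _ (is_deriveN d2)) => s.
have dV : forall t : R, 0 < t -> is_derive t 1 V
   (2 * a * dotv (z t) (w t) + 2 * c * dotv (w t) (w t) - 2 * dotv (c *: z t + w t) (F t)).
  move=> t t0; apply: is_derive_eq.
    apply: is_deriveD; first apply: is_deriveD.
    - exact: (is_deriveZ a (dot_derive (dz t t0) (dz t t0))).
    - exact: (is_deriveZ (2 * c) (dot_derive (dz t t0) (dw t t0))).
    - exact: (dot_derive (dw t t0) (dw t t0)).
  move: (z t) (w t) (F t) => zt wt Ft.
  rewrite (dotvC wt zt) !dotvNr dotvNl (dotvC Ft wt) dotvDl dotvZl.
  move: (dotv zt wt) (dotv wt wt) (dotv zt Ft) (dotv wt Ft) => A1 B1 C1 D1.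
  rewrite /GRing.scale /=; ring.
pose e := fun s : R => expR (mu * s).
have de : forall s : R, is_derive s 1 e (expR (mu * s) * mu).
  move=> s.
  have h := is_deriveZ mu (is_derive_id s 1).
  have dm : is_derive s 1 (fun s : R => mu * s) (mu *: 1).
    by apply: (is_derive_ext _ h) => r.
  have h2 := is_derive1_comp (is_derive_expR (mu * s)) dm.
  have h3 : is_derive s 1 e (expR (mu * s) * mu%:A) := h2.
  apply: is_derive_eq.
  by rewrite /GRing.scale /= mulr1.
have ce : continuous e.
  move=> s; apply: differentiable_continuous; rewrite -derivable1_diffP.
  exact: (@ex_derive _ _ _ _ _ _ _ (de s)).
pose g := fun s : R => V s * e s.
have dg : forall s : R, 0 < s -> is_derive s 1 g
   (V s * (expR (mu * s) * mu) + e s * (2 * a * dotv (z s) (w s) + 2 * c * dotv (w s) (w s)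
     - 2 * dotv (c *: z s + w s) (F s))).
  move=> s s0; apply: (is_derive_ext _ (is_deriveM (dV s s0) (de s))) => r //.
have g'le0 : forall s : R, 0 < s -> derive1 g s <= 0.
  move=> s s0; rewrite derive1E (@derive_val _ _ _ _ _ _ _ (dg s s0)).
  have := hV s s0; have := expR_gt0 (mu * s).
  rewrite /e; move: (expR (mu * s)) (V s) (2 * a * _ + _ - _) => E0 V0 D hE hh.
  have : E0 * D <= E0 * (- mu * V0) by rewrite ler_pM2l.
  move=> h; rewrite /GRing.scale /=; nra.
have cz : {within [set t | 0 <= t], continuous z}.
  have cs : continuous (fun M : 'cV[R]_n => ystar - M).
    by move=> M; apply: continuousB; [exact: cst_continuous | exact: cvg_id].
  exact: (within_comp_cont cs cx1).
have cw : {within [set t | 0 <= t], continuous w}.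
  have cs : continuous (fun M : 'cV[R]_n => - M).
    by move=> M; apply: continuousN; exact: cvg_id.
  exact: (within_comp_cont cs cx2).
have cg : {within `[0, +oo[, continuous g}.
  rewrite set_itvcy.
  have c1 := dot_cont cz cz.
  have c2 := dot_cont cz cw.
  have c3 := dot_cont cw cw.
  have c4 : {within [set t | 0 <= t], continuous e} := continuous_subspaceT ce.
  move=> x; move: (c1 x) (c2 x) (c3 x) (c4 x) => {c1 c2 c3 c4} c1 c2 c3 c4.
  have h1 := continuousM (@cst_continuous _ _ a x) c1.
  have h2 := continuousM (@cst_continuous _ _ (2 * c) x) c2.
  have h3 := continuousD (continuousD h1 h2) c3.
  exact: (continuousM h3 c4).
move=> t t0.
have hd1 : forall x, x \in `]0, +oo[%R -> derivable g x 1.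
  move=> x; rewrite in_itv /= andbT => x0; exact: (@ex_derive _ _ _ _ _ _ _ (dg x x0)).
have hd2 : forall x, x \in `]0, +oo[%R -> derive1 g x <= 0.
  move=> x; rewrite in_itv /= andbT => x0; exact: g'le0.
have := @ler0_derive1_nincry R g 0 hd1 hd2 cg 0 t (lexx 0) t0.
rewrite /g /e mulr0 expR0 mulr1 => h.
have E : expR (mu * t) * expR (- (mu * t)) = 1 by rewrite expRxMexpNx_1.
rewrite mulNr -[V t]mulr1 -E mulrA.
by apply: ler_wpM2r.
Qed.

End Decay.

Lemma final_sq (R : realType) (Z W Z0 W0 Vt V0 E d' Mv : R) :
  0 <= Z -> 0 <= W -> 0 <= Z0 -> 0 <= W0 -> 0 < d' -> 0 < Mv -> 0 <= E ->
  Vt <= V0 * E ^+ 2 -> d' * (Z ^+ 2 + W ^+ 2) <= Vt -> V0 <= Mv * (Z0 ^+ 2 + W0 ^+ 2) ->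
  Z + W <= Num.sqrt (2 * Mv / d') * E * (Z0 + W0).
Proof.
move=> Z0' W0' Z00 W00 d0 M0 E0 h1 h2 h3.
have K0 : 0 <= 2 * Mv / d' by apply: divr_ge0; [apply: mulr_ge0; lra | lra].
have hr : 0 <= Num.sqrt (2 * Mv / d') * E * (Z0 + W0).
  by apply: mulr_ge0; [apply: mulr_ge0; [exact: sqrtr_ge0 | done] | lra].
rewrite -(ler_pXn2r (n:=2)) // ?nnegrE ?addr_ge0 //.
rewrite !exprMn sqr_sqrtr //.
rewrite -(ler_pM2l d0).
have -> : d' * (2 * Mv / d' * E ^+ 2 * (Z0 + W0) ^+ 2) = 2 * Mv * E ^+ 2 * (Z0 + W0) ^+ 2.
  by field; rewrite gt_eqF.
have s1 : (Z + W) ^+ 2 <= 2 * (Z ^+ 2 + W ^+ 2) by have := sqr_ge0 (Z - W); rewrite sqrrB sqrrD; lra.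
have s2 : Z0 ^+ 2 + W0 ^+ 2 <= (Z0 + W0) ^+ 2 by rewrite sqrrD; have := mulr_ge0 Z00 W00; lra.
have E2 : 0 <= E ^+ 2 by exact: sqr_ge0.
have s3 : V0 * E ^+ 2 <= Mv * (Z0 ^+ 2 + W0 ^+ 2) * E ^+ 2 by rewrite ler_wpM2r.
have s4 : Mv * (Z0 ^+ 2 + W0 ^+ 2) * E ^+ 2 <= Mv * (Z0 + W0) ^+ 2 * E ^+ 2.
  by rewrite ler_wpM2r // ler_wpM2l // ltW.
have s5 : d' * (Z + W) ^+ 2 <= d' * (2 * (Z ^+ 2 + W ^+ 2)) by rewrite ler_wpM2l // ltW.
lra.
Qed.

Unset Implicit Arguments.

Theorem theorem3p2 (R : realType) (L1 L2 b kp kd : R) :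
  0 < L1 -> 0 < L2 -> 0 < b -> Omega_pd L1 L2 b kp kd ->
  exists M lam : R, 0 < M /\ 0 < lam /\
    forall (n : nat), (0 < n)%N ->
    forall (ystar : 'cV[R]_n)
           (f : 'cV[R]_n -> 'cV[R]_n -> 'cV[R]_n -> 'cV[R]_n),
      fclass L1 L2 b ystar f ->
    forall x1 x2 : R -> 'cV[R]_n,
      pd_solution kp kd ystar f x1 x2 ->
    forall t : R, 0 <= t ->
      enorm (ystar - x1 t) + enorm (- x2 t)
        <= M * expR (- lam * t) * (enorm (ystar - x1 0) + enorm (- x2 0)).
Proof.
move=> L10 L20 b0 HO.
have := consts L10 L20 b0 HO => /= -[[c0 hc p0 r0 hpqr] ha].
have [kp0 [kd0 _]] := HO.
pose c := kp / kd.
pose a := 2 * b * kp.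
pose p := c * (b * kp - L1).
pose q := c * L2 + L1.
pose r := kd * b - c - L2.
pose d := (4 * p * r - q ^+ 2) / (4 * (p + r)).
pose d' := (4 * a * 1 - (2 * c) ^+ 2) / (4 * (a + 1)).
pose Mv := a + c + 1.
pose mu := 2 * d / Mv.
have a0 : 0 < a by rewrite /a !mulr_gt0.
have {p0}p0 : 0 < p := p0.
have {r0}r0 : 0 < r := r0.
have {hpqr}hpqr : q ^+ 2 < 4 * p * r := hpqr.
have {ha}ha : (2 * c) ^+ 2 < 4 * a * 1 := ha.
have {c0}c0 : 0 < c := c0.
have {hc}hc : c * kd = kp := hc.
have d0 : 0 < d.
  by rewrite /d divr_gt0 // ?subr_gt0 // mulr_gt0 // addr_gt0.
have d'0 : 0 < d'.
  by rewrite /d' divr_gt0 // ?subr_gt0 // mulr_gt0 // addr_gt0.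
have Mv0 : 0 < Mv by rewrite /Mv; lra.
have mu0 : 0 < mu by rewrite /mu divr_gt0 // mulr_gt0.
exists (Num.sqrt (2 * Mv / d')), (d / Mv).
split; first by rewrite sqrtr_gt0 divr_gt0 // mulr_gt0.
split; first by rewrite divr_gt0.
move=> n n0 ystar f hf x1 x2 hsol t t0.
have hV : forall s : R, 0 < s ->
  2 * a * dotv (ystar - x1 s) (- x2 s) + 2 * c * dotv (- x2 s) (- x2 s)
  - 2 * dotv (c *: (ystar - x1 s) + - x2 s) (f (x1 s) (x2 s) (kp *: (ystar - x1 s) + kd *: - x2 s))
  <= - mu * (a * dotv (ystar - x1 s) (ystar - x1 s) + 2 * c * dotv (ystar - x1 s) (- x2 s)
             + dotv (- x2 s) (- x2 s)).
  move=> s _.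
  have kb := key_bound kp (ystar - x1 s) (- x2 s) hf kd0.
  have e1 : ystar - (ystar - x1 s) = x1 s by rewrite opprB addrC subrK.
  rewrite e1 opprK in kb.
  move: kb; move: (f (x1 s) (x2 s) _) => Ft.
  move: (ystar - x1 s) (- x2 s) => zt wt kb.
  fold c in kb.
  have hvv : dotv (c *: zt + wt) (c *: zt + wt) = c ^+ 2 * dotv zt zt + 2 * c * dotv zt wt + dotv wt wt.
    rewrite dotvDl !dotvDr !dotvZl !dotvZr (dotvC wt zt).
    move: (dotv zt zt) (dotv zt wt) (dotv wt wt) => A B C; ring.
  have hN : enorm (c *: zt + wt) ^+ 2 = c ^+ 2 * enorm zt ^+ 2 + 2 * c * dotv zt wt + enorm wt ^+ 2.
    by rewrite !enorm_sqr.
  have hcs := CS zt wt.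
  have fin := @final_ineq R b kp kd L1 L2 c (enorm zt) (enorm wt) (enorm (c *: zt + wt)) (dotv zt wt) (ltW L10) (ltW L20) hc c0 (enorm_ge0 zt) (enorm_ge0 wt) (enorm_ge0 (c *: zt + wt)) hcs hN.
  rewrite -/p -/q -/r in fin.
  have ql := quad_form_lb (enorm zt) (enorm wt) p0 r0 hpqr.
  rewrite -/d in ql.
  have hZW : 2 * (enorm zt * enorm wt) <= enorm zt ^+ 2 + enorm wt ^+ 2.
    have := sqr_ge0 (enorm zt - enorm wt); rewrite sqrrB; lra.
  have up : a * enorm zt ^+ 2 + 2 * c * dotv zt wt + enorm wt ^+ 2 <= Mv * (enorm zt ^+ 2 + enorm wt ^+ 2).
    have : c * (2 * dotv zt wt) <= c * (2 * (enorm zt * enorm wt)) by rewrite ler_pM2l //; lra.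
    have : 0 <= enorm zt ^+ 2 by exact: sqr_ge0.
    have : 0 <= enorm wt ^+ 2 by exact: sqr_ge0.
    rewrite /Mv; nra.
  have hmu : mu * Mv = 2 * d by rewrite /mu divfK // gt_eqF.
  have up' : mu * (a * enorm zt ^+ 2 + 2 * c * dotv zt wt + enorm wt ^+ 2) <= mu * (Mv * (enorm zt ^+ 2 + enorm wt ^+ 2)).
    by rewrite ler_pM2l.
  rewrite mulrA hmu in up'.
  rewrite hvv -!enorm_sqr in kb.
  rewrite -!enorm_sqr.
  rewrite hN -/a in fin.
  lra.
have lowV : forall zt wt : 'cV[R]_n, d' * (enorm zt ^+ 2 + enorm wt ^+ 2)
    <= a * dotv zt zt + 2 * c * dotv zt wt + dotv wt wt.
  move=> zt wt.
  have ql := quad_form_lb (enorm zt) (enorm wt) a0 ltr01 ha.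
  rewrite -/d' in ql.
  have hcs := CS' zt wt.
  have : c * (- (enorm zt * enorm wt)) <= c * dotv zt wt by rewrite ler_pM2l.
  rewrite -!enorm_sqr; lra.
have upV : forall zt wt : 'cV[R]_n, a * dotv zt zt + 2 * c * dotv zt wt + dotv wt wt
    <= Mv * (enorm zt ^+ 2 + enorm wt ^+ 2).
  move=> zt wt.
  have hcs := CS zt wt.
  have hZW : 2 * (enorm zt * enorm wt) <= enorm zt ^+ 2 + enorm wt ^+ 2.
    have := sqr_ge0 (enorm zt - enorm wt); rewrite sqrrB; lra.
  have : c * (2 * dotv zt wt) <= c * (2 * (enorm zt * enorm wt)) by rewrite ler_pM2l //; lra.
  have : 0 <= enorm zt ^+ 2 by exact: sqr_ge0.
  have : 0 <= enorm wt ^+ 2 by exact: sqr_ge0.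
  rewrite -!enorm_sqr /Mv; nra.
have Hdec := @decay R n kp kd a c mu ystar f x1 x2 hsol hV t t0.
have eE : expR (- mu * t) = expR (- (d / Mv) * t) ^+ 2.
  rewrite expr2 -expRD /mu; congr expR; field; exact: lt0r_neq0.
rewrite eE in Hdec.
apply: (final_sq (enorm_ge0 _) (enorm_ge0 _) (enorm_ge0 _) (enorm_ge0 _) d'0 Mv0 (ltW (expR_gt0 _)) Hdec).
  exact: lowV.
exact: upV.
Qed.
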